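(* Let $(X_n)_{n\ge0}$ be a Bienaym\'e--Galton--Watson branching process with $X_0=1$ and offspring distribution $\mathrm{Bin}(n_0,1/n_0)$, $n_0\ge2$, and let $Y_n=\sum_{k=0}^nX_k$. Then: (a) there exist $c_0>0$ and $p_0>0$ such that $P(Y_n>c_0n^2)\ge p_0/n$ for all $n\ge1$; (b) with these constants, if $\eta_n$ has distribution $\mathrm{Bin}(n,p_0/n)$, then $Y_n[n]$ stochastically dominates $c_0n^2\eta_n$.
   Context: For a random variable $\xi$ and integer $n\ge1$, $\xi[n]$ denotes a random variable distributed as $\sum_{i=1}^n\xi_i$ where $\xi_1,\dots,\xi_n$ are i.i.d. copies of $\xi$. A random variable $U$ stochastically dominates $W$ if $P(U>s)\ge P(W>s)$ for all $s$. *)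

(* Defs.v *)
From Stdlib Require Import Reals Arith.
From Coquelicot Require Import Coquelicot.
Open Scope R_scope.

Definition binom_pmf (m : nat) (p : R) (k : nat) : R :=
  if (k <=? m)%nat then Binomial.C m k * p ^ k * (1 - p) ^ (m - k) else 0.

Definition conv (p q : nat -> R) (k : nat) : R :=
  sum_f_R0 (fun i => p i * q (k - i)%nat) k.

(** m-fold convolution power: law of the sum of m i.i.d. copies (xi[m]). *)
Fixpoint convpow (m : nat) (p : nat -> R) : nat -> R :=
  match m with
  | O => fun k => if (k =? 0)%nat then 1 else 0
  | S m' => conv p (convpow m' p)
  end.

Definition offspring (n0 : nat) : nat -> R := binom_pmf n0 (1 / INR n0).

(** Joint law of (X_k, Y_k) for the BGW process with X_0 = 1, Y_k = X_0+...+X_k.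
    Markov transition: given X_k = x, X_(k+1) is the sum of x i.i.d. offspring
    variables (law convpow x offspring), and Y_(k+1) = Y_k + X_(k+1).
    (The sum over x is restricted to x <= Y_k, since X_k <= Y_k always.) *)
Fixpoint gw_joint (n0 : nat) (k : nat) : nat -> nat -> R :=
  match k with
  | O => fun x y => if andb (x =? 1)%nat (y =? 1)%nat then 1 else 0
  | S k' => fun x' y' =>
      if (x' <=? y')%nat then
        sum_f_R0 (fun x => gw_joint n0 k' x (y' - x')%nat
                            * convpow x (offspring n0) x') (y' - x')%nat
      else 0
  end.

Definition Y_pmf (n0 k : nat) (y : nat) : R :=
  sum_f_R0 (fun x => gw_joint n0 k x y) y.

Definition tail (p : nat -> R) (s : R) : R :=
  Series (fun y => if Rlt_dec s (INR y) then p y else 0).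

Definition scaled_binom_tail (a : R) (m : nat) (q : R) (s : R) : R :=
  sum_f_R0 (fun k => if Rlt_dec s (a * INR k) then binom_pmf m q k else 0) m.

(* Main.v *)
Require Import Defs.
From Stdlib Require Import Reals Arith.
From Coquelicot Require Import Coquelicot.
From Stdlib Require Import Lia Lra Psatz.
From Stdlib Require List.
Import List.ListNotations.
Open Scope list_scope.
Open Scope R_scope.

Fixpoint EL {A : Type} (L : list (A * R)) (f : A -> R) : R :=
  match L with
  | nil => 0
  | a :: L' => snd a * f (fst a) + EL L' f
  end.

Lemma EL_ext_in {A} (L : list (A*R)) f g :
  (forall a, List.In a L -> f (fst a) = g (fst a)) -> EL L f = EL L g.
Proof.
  induction L as [|a L IH]; intros H; simpl; auto.
  rewrite H by (left; auto). rewrite IH; auto. intros b Hb; apply H; right; auto.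
Qed.

Lemma EL_ext {A} (L : list (A*R)) f g :
  (forall a, f a = g a) -> EL L f = EL L g.
Proof. intros H; apply EL_ext_in; auto. Qed.

Lemma EL_plus {A} (L : list (A*R)) f g :
  EL L (fun a => f a + g a) = EL L f + EL L g.
Proof. induction L; simpl; [ring|rewrite IHL; ring]. Qed.

Lemma EL_scal {A} (L : list (A*R)) c f :
  EL L (fun a => c * f a) = c * EL L f.
Proof. induction L; simpl; [ring|rewrite IHL; ring]. Qed.

Lemma EL_scal_r {A} (L : list (A*R)) c f :
  EL L f * c = EL L (fun a => f a * c).
Proof. induction L; simpl; [ring|rewrite <- IHL; ring]. Qed.

Lemma EL_zero {A} (L : list (A*R)) f :
  (forall a, f a = 0) -> EL L f = 0.
Proof. intros H; induction L; simpl; auto. rewrite H, IHL; ring. Qed.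

Lemma EL_zero_in {A} (L : list (A*R)) f :
  (forall a, List.In a L -> f (fst a) = 0) -> EL L f = 0.
Proof.
  intros H. rewrite (EL_ext_in L f (fun _ => 0)); auto. apply EL_zero; auto.
Qed.

Lemma EL_const {A} (L : list (A*R)) c :
  EL L (fun _ => c) = c * EL L (fun _ => 1).
Proof. induction L; simpl; [ring|rewrite IHL; ring]. Qed.

Lemma EL_app {A} (L1 L2 : list (A*R)) f : EL (L1 ++ L2) f = EL L1 f + EL L2 f.
Proof. induction L1; simpl; [ring|rewrite IHL1; ring]. Qed.

Definition wnn {A} (L : list (A*R)) := forall a, List.In a L -> 0 <= snd a.

Lemma EL_mono {A} (L : list (A*R)) f g :
  wnn L -> (forall a, List.In a L -> f (fst a) <= g (fst a)) -> EL L f <= EL L g.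
Proof.
  induction L as [|a L IH]; intros Hw H; simpl; [lra|].
  assert (0 <= snd a) by (apply Hw; left; auto).
  assert (f (fst a) <= g (fst a)) by (apply H; left; auto).
  assert (EL L f <= EL L g).
  { apply IH; [intros b Hb; apply Hw; right; auto | intros b Hb; apply H; right; auto]. }
  nra.
Qed.

Lemma EL_map_w {A B} (M : list (B*R)) (h : B -> A) w f :
  EL (List.map (fun b => (h (fst b), w * snd b)) M) f = w * EL M (fun b => f (h b)).
Proof. induction M; simpl; [ring|rewrite IHM; ring]. Qed.

Lemma EL_bind {A B C} (L : list (A*R)) (K : A -> list (B*R)) (h : A -> B -> C) f :
  EL (List.flat_map (fun a => List.map (fun b => (h (fst a) (fst b), snd a * snd b)) (K (fst a))) L) f
  = EL L (fun x => EL (K x) (fun b => f (h x b))).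
Proof.
  induction L as [|a L IH]; simpl; auto.
  rewrite EL_app, IH. f_equal. apply (EL_map_w (K (fst a)) (h (fst a)) (snd a) f).
Qed.

Lemma wnn_bind {A B C} (L : list (A*R)) (K : A -> list (B*R)) (h : A -> B -> C) :
  wnn L -> (forall x, wnn (K x)) ->
  wnn (List.flat_map (fun a => List.map (fun b => (h (fst a) (fst b), snd a * snd b)) (K (fst a))) L).
Proof.
  intros HL HK c Hc. apply List.in_flat_map in Hc as [a [Ha Hc]].
  apply List.in_map_iff in Hc as [b [Hb Hb']]. subst c; simpl.
  apply Rmult_le_pos; [apply HL; auto | apply (HK (fst a)); auto].
Qed.

Lemma sum_swap {A} (L : list (A*R)) (g : nat -> A -> R) N :
  sum_f_R0 (fun i => EL L (g i)) N = EL L (fun a => sum_f_R0 (fun i => g i a) N).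
Proof.
  induction N; simpl; auto.
  rewrite IHN, <- EL_plus. reflexivity.
Qed.

Lemma sum_ind v N (h : nat -> R) :
  sum_f_R0 (fun i => (if Nat.eqb v i then 1 else 0) * h i) N =
  if Nat.leb v N then h v else 0.
Proof.
  induction N; simpl.
  - destruct v; simpl; ring.
  - rewrite IHN.
    destruct (Nat.leb_spec v N), (Nat.eqb_spec v (S N)), (Nat.leb_spec v (S N));
      try lia; try ring. subst. ring.
Qed.

Definition pmfL (L : list (nat*R)) (k : nat) : R :=
  EL L (fun v => if Nat.eqb v k then 1 else 0).

Definition Lconv (L1 L2 : list (nat*R)) : list (nat*R) :=
  List.flat_map (fun a => List.map (fun b => (Nat.add (fst a) (fst b), snd a * snd b)) ((fun _ => L2) (fst a))) L1.

Lemma EL_Lconv L1 L2 f :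
  EL (Lconv L1 L2) f = EL L1 (fun v => EL L2 (fun u => f (v + u)%nat)).
Proof. unfold Lconv. apply (EL_bind L1 (fun _ => L2) Nat.add f). Qed.

Lemma wnn_Lconv L1 L2 : wnn L1 -> wnn L2 -> wnn (Lconv L1 L2).
Proof. intros; unfold Lconv; apply (wnn_bind L1 (fun _ => L2) Nat.add); auto. Qed.

Fixpoint Lpow (m : nat) (L : list (nat*R)) : list (nat*R) :=
  match m with
  | O => [(0%nat, 1)]
  | S m' => Lconv L (Lpow m' L)
  end.

Lemma wnn_Lpow m L : wnn L -> wnn (Lpow m L).
Proof.
  intros HL; induction m; simpl.
  - intros a [<-|[]]; simpl; lra.
  - apply wnn_Lconv; auto.
Qed.

Lemma conv_pmfL L1 L2 k :
  conv (pmfL L1) (pmfL L2) k = pmfL (Lconv L1 L2) k.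
Proof.
  unfold conv.
  rewrite (sum_eq _ (fun i => EL L1 (fun v => (if Nat.eqb v i then 1 else 0) * pmfL L2 (k - i)))).
  2:{ intros i _. unfold pmfL at 1. apply EL_scal_r. }
  rewrite sum_swap.
  unfold pmfL at 2. rewrite EL_Lconv.
  apply EL_ext; intros v. rewrite sum_ind.
  destruct (Nat.leb_spec v k).
  - unfold pmfL; apply EL_ext; intros u.
    destruct (Nat.eqb_spec u (k - v)), (Nat.eqb_spec (v+u) k); try lia; auto.
  - symmetry; apply EL_zero; intros u. destruct (Nat.eqb_spec (v+u) k); try lia; auto.
Qed.

Lemma conv_ext p p' q q' k :
  (forall i, p i = p' i) -> (forall i, q i = q' i) -> conv p q k = conv p' q' k.
Proof. intros Hp Hq; unfold conv; apply sum_eq; intros; rewrite Hp, Hq; auto. Qed.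

Lemma convpow_ext m p p' k :
  (forall i, p i = p' i) -> convpow m p k = convpow m p' k.
Proof.
  revert k; induction m; intros k H; simpl; auto.
  apply conv_ext; auto.
Qed.

Lemma convpow_pmfL m L k : convpow m (pmfL L) k = pmfL (Lpow m L) k.
Proof.
  revert k; induction m; intros k; simpl.
  - unfold pmfL; simpl. destruct k; simpl; ring.
  - rewrite (conv_ext _ (pmfL L) _ (pmfL (Lpow m L))); auto.
    apply conv_pmfL.
Qed.

Lemma C_n0 n : Binomial.C n 0 = 1.
Proof. unfold Binomial.C. rewrite Nat.sub_0_r. simpl. field. apply INR_fact_neq_0. Qed.
Lemma C_nn n : Binomial.C n n = 1.
Proof. unfold Binomial.C. rewrite Nat.sub_diag. simpl. field. apply INR_fact_neq_0. Qed.

Lemma binom_step m q k :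
  binom_pmf (S m) q k = (1-q) * binom_pmf m q k +
    match k with O => 0 | S k' => q * binom_pmf m q k' end.
Proof.
  unfold binom_pmf. destruct k as [|k].
  - simpl. rewrite !C_n0, Nat.sub_0_r. simpl. ring.
  - replace (S k <=? S m)%nat with (k <=? m)%nat by reflexivity.
    destruct (Nat.leb_spec k m), (Nat.leb_spec (S k) m); try lia.
    + rewrite <- pascal by lia.
      replace (S m - S k)%nat with (m - k)%nat by lia.
      replace (m - k)%nat with (S (m - S k)) by lia. simpl. ring.
    + assert (k = m) by lia. subst. rewrite !C_nn, !Nat.sub_diag. simpl. ring.
    + ring.
Qed.

Definition bern (q : R) : list (nat*R) := [(0%nat, 1 - q); (1%nat, q)].

Lemma binom_Lpow m q k : binom_pmf m q k = pmfL (Lpow m (bern q)) k.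
Proof.
  revert k; induction m; intros k.
  - unfold binom_pmf, pmfL; simpl. destruct k; simpl.
    + rewrite C_n0; ring.
    + ring.
  - rewrite binom_step. unfold pmfL. change (Lpow (S m) (bern q)) with (Lconv (bern q) (Lpow m (bern q))). rewrite EL_Lconv. simpl.
    rewrite IHm. unfold pmfL. destruct k as [|k].
    + rewrite (EL_zero _ (fun u => if (S u =? 0)%nat then 1 else 0)); [ring|].
      intros; reflexivity.
    + rewrite IHm. unfold pmfL. ring.
Qed.

Lemma wnn_bern q : 0 <= q <= 1 -> wnn (bern q).
Proof. intros Hq a [<-|[<-|[]]]; simpl; lra. Qed.

Definition offL (n0 : nat) := Lpow n0 (bern (1 / INR n0)).

Lemma offspring_L n0 k : offspring n0 k = pmfL (offL n0) k.
Proof. unfold offspring, offL. apply binom_Lpow. Qed.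

Lemma convpow_off n0 x k : convpow x (offspring n0) k = pmfL (Lpow x (offL n0)) k.
Proof. rewrite (convpow_ext _ _ (pmfL (offL n0))). apply convpow_pmfL. apply offspring_L. Qed.

Definition Kj n0 (xy : nat*nat) := Lpow (fst xy) (offL n0).
Definition hj (xy : nat*nat) (x' : nat) := (x', (snd xy + x')%nat).

Fixpoint JL (n0 k : nat) : list ((nat*nat)*R) :=
  match k with
  | O => [((1%nat,1%nat),1)]
  | S k' => List.flat_map (fun a => List.map (fun b => (hj (fst a) (fst b), snd a * snd b)) (Kj n0 (fst a))) (JL n0 k')
  end.

Lemma EL_JL n0 k f :
  EL (JL n0 (S k)) f = EL (JL n0 k) (fun xy => EL (Lpow (fst xy) (offL n0)) (fun x' => f (x', snd xy + x')%nat)).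
Proof. simpl JL. rewrite (EL_bind (JL n0 k) (Kj n0) hj f). reflexivity. Qed.

Lemma JL_inv n0 k : forall a, List.In a (JL n0 k) -> (fst (fst a) <= snd (fst a))%nat.
Proof.
  induction k; simpl; intros a Ha.
  - destruct Ha as [<-|[]]; simpl; lia.
  - apply List.in_flat_map in Ha as [b [Hb Ha]]. apply List.in_map_iff in Ha as [c [<- _]].
    simpl. lia.
Qed.

Lemma wnn_JL n0 k : (1 <= n0)%nat -> wnn (JL n0 k).
Proof.
  intros Hn. induction k; simpl.
  - intros a [<-|[]]; simpl; lra.
  - apply (wnn_bind (JL n0 k) (Kj n0) hj); auto.
    intros x. unfold Kj. apply wnn_Lpow. unfold offL. apply wnn_Lpow. apply wnn_bern.
    assert (1 <= INR n0) by (apply (le_INR 1); auto). split.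
    + apply Rmult_le_pos; [lra|]. apply Rlt_le, Rinv_0_lt_compat; lra.
    + unfold Rdiv. rewrite Rmult_1_l. rewrite <- Rinv_1. apply Rinv_le_contravar; lra.
Qed.

Definition pmf2 (L : list ((nat*nat)*R)) x y :=
  EL L (fun p => if andb (Nat.eqb (fst p) x) (Nat.eqb (snd p) y) then 1 else 0).

Lemma gw_JL n0 k x y : gw_joint n0 k x y = pmf2 (JL n0 k) x y.
Proof.
  revert x y; induction k; intros x' y'.
  - unfold pmf2; simpl. destruct x' as [|[|x']], y' as [|[|y']]; simpl; ring.
  - simpl gw_joint. unfold pmf2 at 1. rewrite EL_JL.
    destruct (Nat.leb_spec x' y').
    + rewrite (sum_eq _ (fun x => EL (JL n0 k) (fun p => (if Nat.eqb (fst p) x then 1 else 0) *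
          ((if Nat.eqb (snd p) (y' - x') then 1 else 0) * pmfL (Lpow x (offL n0)) x')))).
      2:{ intros i _. rewrite IHk, convpow_off. unfold pmf2. rewrite EL_scal_r.
          apply EL_ext. intros p. destruct (fst p =? i)%nat, (snd p =? y' - x')%nat; simpl; ring. }
      rewrite sum_swap. apply EL_ext_in. intros a Ha. rewrite sum_ind.
      pose proof (JL_inv n0 k a Ha) as Hinv.
      destruct (Nat.eqb_spec (snd (fst a)) (y' - x')).
      * destruct (Nat.leb_spec (fst (fst a)) (y' - x')); try lia.
        rewrite Rmult_1_l. unfold pmfL. apply EL_ext. intros u. simpl.
        destruct (Nat.eqb_spec u x'), (Nat.eqb_spec (snd (fst a) + u) y'); simpl; try lia; auto.
      * match goal with |- _ = EL ?L ?f => rewrite (EL_zero L f) end.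
        { destruct (fst (fst a) <=? y' - x')%nat; ring. }
        intros u; simpl. destruct (Nat.eqb_spec u x'), (Nat.eqb_spec (snd (fst a) + u) y'); simpl; try lia; auto.
    + symmetry. apply EL_zero. intros p. apply EL_zero. intros u. simpl.
      destruct (Nat.eqb_spec u x'), (Nat.eqb_spec (snd p + u) y'); simpl; try lia; auto.
Qed.

Definition YL n0 k : list (nat*R) := List.map (fun a => (snd (fst a), snd a)) (JL n0 k).

Lemma EL_map_fst {A B} (L : list (A*R)) (h : A -> B) f :
  EL (List.map (fun a => (h (fst a), snd a)) L) f = EL L (fun x => f (h x)).
Proof. induction L; simpl; auto. rewrite IHL; auto. Qed.

Lemma Y_YL n0 k y : Y_pmf n0 k y = pmfL (YL n0 k) y.
Proof.
  unfold Y_pmf. rewrite (sum_eq _ (fun x => EL (JL n0 k) (fun p => (if Nat.eqb (fst p) x then 1 else 0) *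
          (if Nat.eqb (snd p) y then 1 else 0)))).
  2:{ intros i _. rewrite gw_JL. unfold pmf2. apply EL_ext. intros p.
      destruct (fst p =? i)%nat, (snd p =? y)%nat; simpl; ring. }
  rewrite sum_swap. unfold pmfL, YL. rewrite EL_map_fst. apply EL_ext_in. intros a Ha.
  rewrite sum_ind. pose proof (JL_inv n0 k a Ha).
  destruct (Nat.eqb_spec (snd (fst a)) y); destruct (Nat.leb_spec (fst (fst a)) y); try lia; auto.
Qed.

Lemma wnn_YL n0 k : (1 <= n0)%nat -> wnn (YL n0 k).
Proof.
  intros Hn a Ha. unfold YL in Ha. apply List.in_map_iff in Ha as [b [<- Hb]]. simpl.
  apply (wnn_JL n0 k Hn); auto.
Qed.

Lemma bound_exists {A} (L : list (nat*A)) : exists N, forall a, List.In a L -> (fst a <= N)%nat.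
Proof.
  induction L as [|a L [N HN]].
  - exists 0%nat; intros a [].
  - exists (Nat.max (fst a) N). intros b [<-|Hb]; [lia|]. specialize (HN b Hb); lia.
Qed.

Lemma sum_stable (f : nat -> R) N d : (forall k, (N < k)%nat -> f k = 0) ->
  sum_f_R0 f (N + d) = sum_f_R0 f N.
Proof.
  intros H; induction d.
  - rewrite Nat.add_0_r; auto.
  - replace (N + S d)%nat with (S (N + d)) by lia. simpl. rewrite IHd, H by lia. ring.
Qed.

Lemma Series_finite (f : nat -> R) N : (forall k, (N < k)%nat -> f k = 0) ->
  Series f = sum_f_R0 f N.
Proof.
  intros H. apply is_series_unique. unfold is_series.
  apply filterlim_ext_loc with (fun _ => sum_f_R0 f N).
  - exists N. intros m Hm. rewrite sum_n_Reals.
    replace m with (N + (m - N))%nat by lia. symmetry; apply sum_stable; auto.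
  - apply filterlim_const.
Qed.

Definition ind (s : R) (v : nat) : R := if Rlt_dec s (INR v) then 1 else 0.

Lemma tail_pmfL L s : tail (pmfL L) s = EL L (ind s).
Proof.
  destruct (bound_exists L) as [N HN]. unfold tail.
  rewrite (Series_finite _ N).
  - rewrite (sum_eq _ (fun y => EL L (fun v => (if Nat.eqb v y then 1 else 0) * ind s y))).
    2:{ intros i _. unfold pmfL. unfold ind.
        destruct (Rlt_dec s (INR i)).
        - apply EL_ext; intros; ring.
        - symmetry; apply EL_zero; intros; ring. }
    rewrite sum_swap. apply EL_ext_in. intros a Ha. rewrite sum_ind.
    specialize (HN a Ha). destruct (Nat.leb_spec (fst a) N); try lia; auto.
  - intros k Hk. destruct (Rlt_dec s (INR k)); auto. unfold pmfL. apply EL_zero_in.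
    intros a Ha. specialize (HN a Ha). destruct (Nat.eqb_spec (fst a) k); try lia; auto.
Qed.

Lemma EL_mix {A} (L : list (A*R)) f X Y :
  EL L (fun v => f v * X + (1 - f v) * Y) = EL L f * X + (EL L (fun _ => 1) - EL L f) * Y.
Proof. induction L; simpl; [ring|rewrite IHL; ring]. Qed.

Section Dom.
Variables (L : list (nat*R)) (a q : R).
Hypotheses (HL : wnn L) (H1 : EL L (fun _ => 1) = 1) (Ha : 0 <= a) (Hq : 0 <= q <= 1)
  (Hq' : q <= EL L (ind a)).

Definition Bt m s := EL (Lpow m (bern q)) (fun k => if Rlt_dec s (a * INR k) then 1 else 0).
Definition Tt m s := EL (Lpow m L) (ind s).

Lemma Bt_anti m s1 s2 : s1 <= s2 -> Bt m s2 <= Bt m s1.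
Proof.
  intros Hs. unfold Bt. apply EL_mono. apply wnn_Lpow, wnn_bern; auto.
  intros b _. destruct (Rlt_dec s2 (a * INR (fst b))), (Rlt_dec s1 (a * INR (fst b))); lra.
Qed.

Lemma Bt_step m s : Bt (S m) s = (1 - q) * Bt m s + q * Bt m (s - a).
Proof.
  unfold Bt. change (Lpow (S m) (bern q)) with (Lconv (bern q) (Lpow m (bern q))).
  rewrite EL_Lconv. cbn [EL bern fst snd Nat.add]. rewrite Rplus_0_r. f_equal. f_equal.
  apply EL_ext; intros u. rewrite S_INR.
  destruct (Rlt_dec s (a * (INR u + 1))), (Rlt_dec (s - a) (a * INR u)); lra.
Qed.

Lemma Tt_step m s : Tt (S m) s = EL L (fun v => Tt m (s - INR v)).
Proof.
  unfold Tt. change (Lpow (S m) L) with (Lconv L (Lpow m L)).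
  rewrite EL_Lconv. apply EL_ext; intros v. apply EL_ext; intros u. unfold ind.
  rewrite plus_INR. destruct (Rlt_dec s (INR v + INR u)), (Rlt_dec (s - INR v) (INR u)); lra.
Qed.

Lemma dom m : forall s, Tt m s >= Bt m s.
Proof.
  induction m; intros s.
  - unfold Tt, Bt, ind; simpl. rewrite Rmult_0_r. destruct (Rlt_dec s 0); lra.
  - rewrite Tt_step, Bt_step.
    assert (E1 : EL L (fun v => Tt m (s - INR v)) >= EL L (fun v => Bt m (s - INR v))).
    { apply Rle_ge, EL_mono; auto. intros b _. apply Rge_le, IHm. }
    assert (E2 : EL L (fun v => Bt m (s - INR v)) >=
                 EL L (fun v => ind a v * Bt m (s - a) + (1 - ind a v) * Bt m s)).
    { apply Rle_ge, EL_mono; auto. intros b _. unfold ind.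
      pose proof (pos_INR (fst b)).
      destruct (Rlt_dec a (INR (fst b))).
      - assert (Bt m (s - a) <= Bt m (s - INR (fst b))) by (apply Bt_anti; lra). lra.
      - assert (Bt m s <= Bt m (s - INR (fst b))) by (apply Bt_anti; lra). lra. }
    rewrite EL_mix, H1 in E2.
    assert (Bt m s <= Bt m (s - a)) by (apply Bt_anti; lra).
    nra.
Qed.
End Dom.

Definition poly (c0 c1 c2 c3 : R) (u : nat) : R :=
  c0 + c1 * INR u + c2 * INR u ^ 2 + c3 * INR u ^ 3.

Lemma EL_poly {A} (L : list (A*R)) (g : A -> R) c0 c1 c2 c3 :
  EL L (fun a => c0 + c1 * g a + c2 * g a ^ 2 + c3 * g a ^ 3) =
  c0 * EL L (fun _ => 1) + c1 * EL L g + c2 * EL L (fun a => g a ^ 2) + c3 * EL L (fun a => g a ^ 3).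
Proof. induction L; cbn [EL]; [ring|rewrite IHL; ring]. Qed.

Lemma bern_mom q m c0 c1 c2 c3 :
  let x := INR m in
  EL (Lpow m (bern q)) (poly c0 c1 c2 c3) =
  c0 + c1 * (x * q) + c2 * (x * q + x * (x - 1) * q ^ 2)
     + c3 * (x * q + 3 * x * (x - 1) * q ^ 2 + x * (x - 1) * (x - 2) * q ^ 3).
Proof.
  revert c0 c1 c2 c3; induction m; intros c0 c1 c2 c3 x; subst x.
  - unfold poly; simpl. ring.
  - change (Lpow (S m) (bern q)) with (Lconv (bern q) (Lpow m (bern q))).
    rewrite EL_Lconv. cbn [EL bern fst snd Nat.add].
    rewrite IHm.
    rewrite (EL_ext _ (fun u => poly c0 c1 c2 c3 (S u))
                       (poly (c0 + c1 + c2 + c3) (c1 + 2 * c2 + 3 * c3) (c2 + 3 * c3) c3)).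
    2:{ intros u. unfold poly. rewrite S_INR. ring. }
    rewrite IHm. rewrite S_INR. ring.
Qed.

Section Off.
Variables (L : list (nat*R)) (s k3 : R).
Hypothesis HL : forall c0 c1 c2 c3,
  EL L (poly c0 c1 c2 c3) = c0 + c1 + c2 * (1 + s) + c3 * (1 + 3 * s + k3).

Definition Qv (c0 c1 c2 c3 X : R) :=
  c0 + c1 * X + c2 * (X ^ 2 + s * X) + c3 * (X ^ 3 + 3 * s * X ^ 2 + k3 * X).

Lemma off_mom x : forall c0 c1 c2 c3,
  EL (Lpow x L) (poly c0 c1 c2 c3) = Qv c0 c1 c2 c3 (INR x).
Proof.
  induction x; intros c0 c1 c2 c3.
  - unfold poly, Qv; simpl. ring.
  - change (Lpow (S x) L) with (Lconv L (Lpow x L)). rewrite EL_Lconv.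
    rewrite (EL_ext _ _ (fun v => EL (Lpow x L) (poly
       (c0 + c1 * INR v + c2 * INR v ^ 2 + c3 * INR v ^ 3)
       (c1 + 2 * c2 * INR v + 3 * c3 * INR v ^ 2)
       (c2 + 3 * c3 * INR v) c3))).
    2:{ intros v. apply EL_ext. intros u. unfold poly. rewrite plus_INR. ring. }
    rewrite (EL_ext _ _ (fun v => Qv (c0 + c1 * INR v + c2 * INR v ^ 2 + c3 * INR v ^ 3)
       (c1 + 2 * c2 * INR v + 3 * c3 * INR v ^ 2) (c2 + 3 * c3 * INR v) c3 (INR x))).
    2:{ intros v. apply IHx. }
    set (X := INR x).
    rewrite (EL_ext _ _ (poly
       (c0 + c1 * X + c2 * (X ^ 2 + s * X) + c3 * (X ^ 3 + 3 * s * X ^ 2 + k3 * X))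
       (c1 + 2 * c2 * X + 3 * c3 * (X ^ 2 + s * X))
       (c2 + 3 * c3 * X) c3)).
    2:{ intros v. unfold Qv, poly. ring. }
    rewrite HL. unfold Qv. rewrite S_INR. fold X. ring.
Qed.
End Off.

Lemma offL_mom n0 : (1 <= n0)%nat -> forall c0 c1 c2 c3,
  EL (offL n0) (poly c0 c1 c2 c3) = c0 + c1 + c2 * (1 + (1 - 1 / INR n0))
    + c3 * (1 + 3 * (1 - 1 / INR n0) + (1 - 1 / INR n0) * (1 - 2 / INR n0)).
Proof.
  intros Hn c0 c1 c2 c3. unfold offL. rewrite bern_mom.
  assert (INR n0 <> 0) by (apply not_0_INR; lia).
  field; auto.
Qed.

Section Joint.
Variable n0 : nat.
Hypothesis Hn0 : (2 <= n0)%nat.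
Let s := 1 - 1 / INR n0.
Let k3 := (1 - 1 / INR n0) * (1 - 2 / INR n0).

Lemma s_bounds : 1/2 <= s <= 1 /\ 0 <= k3 <= 1.
Proof.
  assert (H2 : 2 <= INR n0) by (apply (le_INR 2); auto).
  assert (0 < / INR n0 <= 1/2).
  { split. apply Rinv_0_lt_compat; lra.
    replace (1/2) with (/2) by field. apply Rinv_le_contravar; lra. }
  unfold s, k3. unfold Rdiv. rewrite !Rmult_1_l. split; [lra|]. split; nra.
Qed.

Lemma offQ x c0 c1 c2 c3 :
  EL (Lpow x (offL n0)) (poly c0 c1 c2 c3) = Qv s k3 c0 c1 c2 c3 (INR x).
Proof.
  apply off_mom. intros. rewrite offL_mom by lia. unfold s, k3. ring.
Qed.

Lemma JL_step k F (d0 d1 d2 d3 : nat*nat -> R) :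
  (forall p x', F (x', snd p + x')%nat = poly (d0 p) (d1 p) (d2 p) (d3 p) x') ->
  EL (JL n0 (S k)) F = EL (JL n0 k) (fun p => Qv s k3 (d0 p) (d1 p) (d2 p) (d3 p) (INR (fst p))).
Proof.
  intros H. rewrite EL_JL. apply EL_ext. intros p.
  rewrite (EL_ext _ _ (poly (d0 p) (d1 p) (d2 p) (d3 p))) by (intros; apply H).
  apply offQ.
Qed.

Definition mom k i j := EL (JL n0 k) (fun p => INR (fst p) ^ i * INR (snd p) ^ j).

Ltac fin := unfold mom; rewrite <- ?EL_scal; rewrite <- ?EL_plus; apply EL_ext; intros; unfold Qv; ring.
Ltac stp d0 d1 d2 d3 := unfold mom at 1;
  rewrite (JL_step _ _ d0 d1 d2 d3) by (intros; unfold poly; cbn [fst snd]; rewrite ?plus_INR; ring).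

Lemma r00 k : mom (S k) 0 0 = mom k 0 0.
Proof. stp (fun _ : nat*nat => 1) (fun _ : nat*nat => 0) (fun _ : nat*nat => 0) (fun _ : nat*nat => 0). fin. Qed.
Lemma r10 k : mom (S k) 1 0 = mom k 1 0.
Proof. stp (fun _ : nat*nat => 0) (fun _ : nat*nat => 1) (fun _ : nat*nat => 0) (fun _ : nat*nat => 0). fin. Qed.
Lemma r20 k : mom (S k) 2 0 = mom k 2 0 + s * mom k 1 0.
Proof. stp (fun _ : nat*nat => 0) (fun _ : nat*nat => 0) (fun _ : nat*nat => 1) (fun _ : nat*nat => 0). fin. Qed.
Lemma r30 k : mom (S k) 3 0 = mom k 3 0 + 3 * s * mom k 2 0 + k3 * mom k 1 0.
Proof. stp (fun _ : nat*nat => 0) (fun _ : nat*nat => 0) (fun _ : nat*nat => 0) (fun _ : nat*nat => 1). fin. Qed.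
Lemma r01 k : mom (S k) 0 1 = mom k 0 1 + mom k 1 0.
Proof. stp (fun p : nat*nat => INR (snd p)) (fun _ : nat*nat => 1) (fun _ : nat*nat => 0) (fun _ : nat*nat => 0). fin. Qed.
Lemma r11 k : mom (S k) 1 1 = mom k 1 1 + mom k 2 0 + s * mom k 1 0.
Proof. stp (fun _ : nat*nat => 0) (fun p : nat*nat => INR (snd p)) (fun _ : nat*nat => 1) (fun _ : nat*nat => 0). fin. Qed.
Lemma r02 k : mom (S k) 0 2 = mom k 0 2 + 2 * mom k 1 1 + mom k 2 0 + s * mom k 1 0.
Proof. stp (fun p : nat*nat => INR (snd p) ^ 2) (fun p : nat*nat => 2 * INR (snd p)) (fun _ : nat*nat => 1) (fun _ : nat*nat => 0). fin. Qed.
Lemma r21 k : mom (S k) 2 1 = mom k 2 1 + s * mom k 1 1 + mom k 3 0 + 3 * s * mom k 2 0 + k3 * mom k 1 0.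
Proof. stp (fun _ : nat*nat => 0) (fun _ : nat*nat => 0) (fun p : nat*nat => INR (snd p)) (fun _ : nat*nat => 1). fin. Qed.
Lemma r12 k : mom (S k) 1 2 = mom k 1 2 + 2 * mom k 2 1 + 2 * s * mom k 1 1 + mom k 3 0 + 3 * s * mom k 2 0 + k3 * mom k 1 0.
Proof. stp (fun _ : nat*nat => 0) (fun p : nat*nat => INR (snd p) ^ 2) (fun p : nat*nat => 2 * INR (snd p)) (fun _ : nat*nat => 1). fin. Qed.
Lemma r03 k : mom (S k) 0 3 = mom k 0 3 + 3 * mom k 1 2 + 3 * mom k 2 1 + 3 * s * mom k 1 1 + mom k 3 0 + 3 * s * mom k 2 0 + k3 * mom k 1 0.
Proof. stp (fun p : nat*nat => INR (snd p) ^ 3) (fun p : nat*nat => 3 * INR (snd p) ^ 2) (fun p : nat*nat => 3 * INR (snd p)) (fun _ : nat*nat => 1). fin. Qed.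

End Joint.

Section Bounds.
Variable n0 : nat.
Hypothesis Hn0 : (2 <= n0)%nat.
Let s := 1 - 1 / INR n0.
Let k3 := (1 - 1 / INR n0) * (1 - 2 / INR n0).

Definition Inv k :=
  let K := INR k + 1 in
  mom n0 k 0 0 = 1 /\ mom n0 k 1 0 = 1 /\ mom n0 k 2 0 = 1 + s * INR k /\
  mom n0 k 3 0 <= 4 * K ^ 2 /\ mom n0 k 0 1 = K /\
  mom n0 k 1 1 <= K ^ 2 /\ s * K ^ 2 / 2 <= mom n0 k 1 1 /\
  s * INR k ^ 3 / 3 <= mom n0 k 0 2 /\
  mom n0 k 2 1 <= 5 * K ^ 3 /\ mom n0 k 1 2 <= 20 * K ^ 4 /\ mom n0 k 0 3 <= 16 * K ^ 5.

Lemma inv_all k : Inv k.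
Proof.
  destruct (s_bounds n0 Hn0) as [[Hs1 Hs2] [Hk1 Hk2]]. fold k3 s in Hs1, Hs2, Hk1, Hk2.
  induction k.
  - unfold Inv, mom; simpl. lra.
  - destruct IHk as (h00 & h10 & h20 & h30 & h01 & h11 & h11' & h02 & h21 & h12 & h03).
    unfold Inv. rewrite (r00 n0 Hn0), (r10 n0 Hn0), (r20 n0 Hn0), (r30 n0 Hn0), (r01 n0 Hn0),
      (r11 n0 Hn0), (r02 n0 Hn0), (r21 n0 Hn0), (r12 n0 Hn0), (r03 n0 Hn0).
    fold k3 s. clearbody s k3. rewrite S_INR.
    pose proof (pos_INR k) as Hk. set (x := INR k) in *.
    rewrite h00, h10, h20, h01.
    assert (Hx2 : 0 <= x^2) by (apply pow_le; lra).
    assert (Hx3 : 0 <= x^3) by (apply pow_le; lra).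
    assert (Hx4 : 0 <= x^4) by (apply pow_le; lra).
    assert (Hx5 : 0 <= x^5) by (apply pow_le; lra).
    assert (Hsx : s * x <= x).
    { assert (0 <= (1 - s) * x) by (apply Rmult_le_pos; lra). lra. }
    assert (Hsx0 : 0 <= s * x) by (apply Rmult_le_pos; lra).
    assert (Hssx : s * (s * x) <= x).
    { assert (0 <= (1 - s) * (s * x)) by (apply Rmult_le_pos; lra). lra. }
    assert (B2 : 3 * s * (1 + s * x) + k3 * 1 <= 3 * (x + 1) + 1) by lra.
    assert (B1 : s * mom n0 k 1 1 <= (x+1)^2).
    { assert (0 <= (1 - s) * (x+1)^2) by (apply Rmult_le_pos; [lra|apply pow_le; lra]).
      assert (0 <= s * ((x+1)^2 - mom n0 k 1 1)) by (apply Rmult_le_pos; lra). lra. }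
    assert (A30 : mom n0 k 3 0 + 3 * s * (1 + s * x) + k3 * 1 <= 4 * (x + 1 + 1) ^ 2) by lra.
    assert (A11 : mom n0 k 1 1 + (1 + s * x) + s * 1 <= (x + 1 + 1) ^ 2) by lra.
    assert (A11' : s * (x + 1 + 1) ^ 2 / 2 <= mom n0 k 1 1 + (1 + s * x) + s * 1) by lra.
    assert (A02 : s * (x + 1) ^ 3 / 3 <= mom n0 k 0 2 + 2 * mom n0 k 1 1 + (1 + s * x) + s * 1) by lra.
    assert (A21 : mom n0 k 2 1 + s * mom n0 k 1 1 + mom n0 k 3 0 + 3 * s * (1 + s * x) + k3 * 1 <= 5 * (x + 1 + 1) ^ 3) by lra.
    assert (A12 : mom n0 k 1 2 + 2 * mom n0 k 2 1 + 2 * s * mom n0 k 1 1 + mom n0 k 3 0 + 3 * s * (1 + s * x) + k3 * 1 <= 20 * (x + 1 + 1) ^ 4) by lra.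
    assert (A03 : mom n0 k 0 3 + 3 * mom n0 k 1 2 + 3 * mom n0 k 2 1 + 3 * s * mom n0 k 1 1 + mom n0 k 3 0 + 3 * s * (1 + s * x) + k3 * 1 <= 16 * (x + 1 + 1) ^ 5) by lra.
    repeat split; try lra; try ring.
Qed.
End Bounds.


Lemma tail_ext p p' s : (forall y, p y = p' y) -> tail p s = tail p' s.
Proof. intros H; unfold tail; apply Series_ext; intros y; rewrite H; auto. Qed.

Definition rr := 1 / 12288.

Lemma partA n0 n : (2 <= n0)%nat -> (1 <= n)%nat ->
  EL (YL n0 n) (ind (1/24 * INR n ^ 2)) >= rr ^ 2 / 24 / INR n.
Proof.
  intros Hn0 Hn.
  destruct (inv_all n0 Hn0 n) as (h00 & h10 & h20 & h30 & h01 & h11 & h11' & h02 & h21 & h12 & h03).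
  destruct (s_bounds n0 Hn0) as [[Hs1 Hs2] _].
  set (N := INR n) in *.
  assert (HN : 1 <= N) by (apply (le_INR 1); auto).
  set (iN := / N).
  assert (HiN : iN * N = 1) by (unfold iN; field; lra).
  assert (HiN0 : 0 < iN) by (unfold iN; apply Rinv_0_lt_compat; lra).
  assert (Hr : 0 < rr) by (unfold rr; lra).
  unfold YL. rewrite EL_map_fst.
  apply Rle_ge.
  apply Rle_trans with (EL (JL n0 n) (fun p =>
      rr^2 * iN^4 * (INR (snd p) ^ 2) + (- (rr^2/24 * iN^2) * INR (snd p) + (- (rr^3 * iN^6)) * INR (snd p) ^ 3))).
  2:{ apply EL_mono. apply wnn_JL; lia. intros p _.
      pose proof (pos_INR (snd (fst p))) as HY. set (Y := INR (snd (fst p))) in *.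
      set (u := Y * iN^2).
      assert (Hu : 0 <= u) by (unfold u; apply Rmult_le_pos; [lra|apply pow_le; lra]).
      replace (rr^2 * iN^4 * Y^2 + (- (rr^2/24 * iN^2) * Y + (- (rr^3 * iN^6)) * Y^3))
        with (rr^2 * u^2 - rr^2 / 24 * u - rr^3 * u^3) by (unfold u; ring).
      unfold ind. fold Y. destruct (Rlt_dec (1/24 * N^2) Y).
      - set (w := rr * u). assert (0 <= w) by (unfold w; apply Rmult_le_pos; lra).
        replace (rr^2 * u^2 - rr^2 / 24 * u - rr^3 * u^3) with (w^2 - w^3 - rr^2/24 * u) by (unfold w; ring).
        assert (0 <= rr^2/24 * u) by (apply Rmult_le_pos; [apply Rmult_le_pos; [apply pow_le|]|]; lra).
        destruct (Rle_dec w 1).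
        + assert (w^2 <= 1) by nra. assert (0 <= w^3) by (apply pow_le; lra). lra.
        + assert (w^2 * (1 - w) <= 0). { assert (0 <= w^2) by (apply pow_le; lra). nra. } nra.
      - assert (u <= 1/24).
        { unfold u. apply Rnot_lt_le in n1.
          replace (1/24) with (1/24 * N^2 * iN^2) by (replace (1/24 * N^2 * iN^2) with (1/24 * (iN*N)^2) by ring; rewrite HiN; ring).
          apply Rmult_le_compat_r; [apply pow_le; lra | lra]. }
        assert (0 <= u^3) by (apply pow_le; lra).
        assert (u * (u - 1/24) <= 0) by nra.
        assert (0 < rr^2) by nra. assert (0 <= rr^3) by (apply pow_le; lra).
        nra. }
  rewrite (EL_ext _ _ (fun p => rr^2 * iN^4 * (INR (snd p) ^ 0 * INR (snd p) ^ 2) +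
     (- (rr^2/24 * iN^2) * (INR (fst p) ^ 0 * INR (snd p) ^ 1) + (- (rr^3 * iN^6)) * (INR (fst p) ^ 0 * INR (snd p) ^ 3))))
     by (intros; cbv beta; ring).
  rewrite !EL_plus, !EL_scal.
  change (EL (JL n0 n) (fun p => INR (snd p) ^ 0 * INR (snd p) ^ 2)) with (EL (JL n0 n) (fun p => INR (snd p) ^ 0 * INR (snd p) ^ 2)).
  fold (mom n0 n 0 1) (mom n0 n 0 3).
  replace (EL (JL n0 n) (fun p => INR (snd p) ^ 0 * INR (snd p) ^ 2)) with (mom n0 n 0 2)
    by (unfold mom; apply EL_ext; intros; ring).
  rewrite h01.
  clearbody iN N.
  assert (E2 : rr^2 * iN^4 * (N^3/6) <= rr^2 * iN^4 * mom n0 n 0 2).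
  { apply Rmult_le_compat_l. apply Rmult_le_pos; apply pow_le; lra.
    assert (0 <= N^3) by (apply pow_le; lra). nra. }
  assert (E3 : rr^3 * iN^6 * mom n0 n 0 3 <= rr^3 * iN^6 * (512 * N^5)).
  { apply Rmult_le_compat_l. apply Rmult_le_pos; apply pow_le; lra.
    assert ((N+1)^5 <= (2*N)^5) by (apply pow_incr; lra).
    replace (512 * N^5) with (16 * (2*N)^5) by ring. nra. }
  replace (rr^2 * iN^4 * (N^3/6)) with (rr^2 * iN / 6 * (iN*N)^3) in E2 by field.
  replace (rr^3 * iN^6 * (512 * N^5)) with (512 * rr^3 * iN * (iN*N)^5) in E3 by ring.
  rewrite HiN in E2, E3.
  assert (E1 : rr ^ 2 / 24 * iN ^ 2 * (N + 1) = rr^2/24 * iN + rr^2/24*iN^2).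
  { replace (rr ^ 2 / 24 * iN ^ 2 * (N + 1)) with (rr^2/24 * iN * (iN * N) + rr^2/24*iN^2) by field.
    rewrite HiN. ring. }
  assert (rr^2/24 * iN^2 <= rr^2/24 * iN).
  { apply Rmult_le_compat_l. unfold rr; lra.
    assert (iN <= 1) by nra.
    nra. }
  replace (rr ^ 2 / 24 / N) with (rr^2/24 * iN) by (field_simplify_eq; [nra | lra]).
  unfold rr in *. lra.
Qed.

Lemma Lpow_bern_bound q m : forall a, List.In a (Lpow m (bern q)) -> (fst a <= m)%nat.
Proof.
  induction m; intros a Ha.
  - destruct Ha as [<-|[]]; simpl; lia.
  - change (Lpow (S m) (bern q)) with (Lconv (bern q) (Lpow m (bern q))) in Ha. unfold Lconv in Ha. apply List.in_flat_map in Ha as [b [Hb Ha]].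
    apply List.in_map_iff in Ha as [c [<- Hc]]. simpl.
    specialize (IHm c Hc). destruct Hb as [<-|[<-|[]]]; simpl; lia.
Qed.

Lemma sbt_Bt a m q s :
  scaled_binom_tail a m q s = EL (Lpow m (bern q)) (fun k => if Rlt_dec s (a * INR k) then 1 else 0).
Proof.
  unfold scaled_binom_tail.
  rewrite (sum_eq _ (fun y => EL (Lpow m (bern q)) (fun v => (if Nat.eqb v y then 1 else 0) *
            (if Rlt_dec s (a * INR y) then 1 else 0)))).
  2:{ intros i _. rewrite binom_Lpow. unfold pmfL.
      destruct (Rlt_dec s (a * INR i)).
      - apply EL_ext; intros; ring.
      - symmetry; apply EL_zero; intros; ring. }
  rewrite sum_swap. apply EL_ext_in. intros b Hb. rewrite sum_ind.
  pose proof (Lpow_bern_bound q m b Hb). destruct (Nat.leb_spec (fst b) m); try lia; auto.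
Qed.

Theorem lemma2p3 (n0 : nat) (Hn0 : (2 <= n0)%nat) :
  exists c0 p0 : R, 0 < c0 /\ 0 < p0 /\
    (forall n : nat, (1 <= n)%nat ->
       tail (Y_pmf n0 n) (c0 * INR n ^ 2) >= p0 / INR n) /\
    (forall n : nat, (1 <= n)%nat -> forall s : R,
       tail (convpow n (Y_pmf n0 n)) s
         >= scaled_binom_tail (c0 * INR n ^ 2) n (p0 / INR n) s).
Proof.
  assert (HtY : forall n a, tail (Y_pmf n0 n) a = EL (YL n0 n) (ind a)).
  { intros n a. rewrite (tail_ext _ (pmfL (YL n0 n))) by apply Y_YL. apply tail_pmfL. }
  exists (1/24), (rr^2/24). split; [lra|]. split; [unfold rr; lra|]. split.
  - intros n Hn. rewrite HtY. apply partA; auto.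
  - intros n Hn s.
    rewrite (tail_ext _ (pmfL (Lpow n (YL n0 n)))).
    2:{ intros y. rewrite (convpow_ext _ _ (pmfL (YL n0 n))) by apply Y_YL. apply convpow_pmfL. }
    rewrite tail_pmfL, sbt_Bt.
    assert (HN : 1 <= INR n) by (apply (le_INR 1); auto).
    apply (dom (YL n0 n) (1/24 * INR n ^ 2) (rr^2/24 / INR n)).
    + apply wnn_YL; lia.
    + unfold YL. rewrite EL_map_fst.
      destruct (inv_all n0 Hn0 n) as (h00 & _).
      transitivity (mom n0 n 0 0); [unfold mom; apply EL_ext; intros; simpl; ring | exact h00].
    + apply Rmult_le_pos; [lra|]. apply pow_le; lra.
    + split.
      * apply Rmult_le_pos; [unfold rr; lra|]. apply Rlt_le, Rinv_0_lt_compat; lra.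
      * unfold Rdiv. rewrite <- (Rmult_1_r 1). apply Rmult_le_compat; unfold rr; try lra.
        -- apply Rlt_le, Rinv_0_lt_compat; lra.
        -- rewrite <- Rinv_1. apply Rinv_le_contravar; lra.
    + apply Rge_le, partA; auto.
Qed.
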